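(* Let $R_{approach}=\sup\{R\in\mathbb R: R\le G(R)\}$. Then $R_{static}\le R_{approach}$, where $$R_{static}=\sup_{w\in\Delta_K}\ \min_{i\ne j}\ \sup_{s\in[0,1]}\ -\sum_{a\in[K]}w_a\log\Big(\sum_{x\in\mathcal X}\nu^i_a(x)^s\nu^j_a(x)^{1-s}\Big).$$
   Context: $\mathcal X$ finite; $\Delta_K,\Delta_m$ the probability simplices on $[K],[m]$; $m\ge2$ bandits $\nu^1,\dots,\nu^m$, $\nu^i=(\nu^i_a)_{a\in[K]}$, each $\nu^i_a$ a full-support distribution on $\mathcal X$. For $\beta\in\Delta_m$ let $\phi_a(\beta)=-\log\sum_x\prod_i\nu^i_a(x)^{\beta_i}$, $I(\beta)=\min_a\phi_a(\beta)$, $L(\beta)=\max_a\phi_a(\beta)$. For $i<j$, $b\in[0,1]$, $\beta_{ij}(b)=b\,e_i+(1-b)e_j$. For $R\in\mathbb R$, $M(R)=\{(i,j):i<j,\ \sup_{b}I(\beta_{ij}(b))<R\}$. Define $$G(R)=\begin{cases}+\infty,&R<\min_{i<j}\sup_{b\in[0,1]}I(\beta_{ij}(b)),\\ \sup_{(\tilde\beta_{ij})}\ \inf_{\lambda\in\Delta_{M(R)}}L\Big(\sum_{(i,j)\in M(R)}\lambda_{ij}\tilde\beta_{ij}\Big),&\text{otherwise},\end{cases}$$ where the supremum is over all choices of points $\tilde\beta_{ij}\in\{\beta_{ij}(b):b\in[0,1]\}$ for $(i,j)\in M(R)$, and an infimum over an empty index set is $+\infty$. *)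

(* Defs.v *)
From HB Require Import structures.
From mathcomp Require Import all_boot all_order all_algebra.
From mathcomp Require Import all_classical all_reals all_analysis.
Set Implicit Arguments. Unset Strict Implicit. Unset Printing Implicit Defensive.
Import Order.TTheory GRing.Theory Num.Theory.
Local Open Scope classical_set_scope.
Local Open Scope ring_scope.

Section Defs.
Variables (R : realType) (X : finType) (K m : nat).
(* nu i a x = nu^i_a(x), bandit i in [m], arm a in [K], outcome x in X *)
Variable nu : 'I_m -> 'I_K -> X -> R.

Definition simplex (n : nat) : set ('I_n -> R) :=
  [set w | (forall k, 0 <= w k) /\ \sum_(k < n) w k = 1].

Definition phi (a : 'I_K) (beta : 'I_m -> R) : R :=
  - ln (\sum_(x : X) \prod_(i < m) (nu i a x) `^ (beta i)).

(* I(beta) = min_a phi_a(beta), L(beta) = max_a phi_a(beta) (in \bar R;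
   finite as soon as K >= 1) *)
Definition Ifun (beta : 'I_m -> R) : \bar R :=
  \big[Order.min/+oo%E]_(a < K) (phi a beta)%:E.
Definition Lfun (beta : 'I_m -> R) : \bar R :=
  \big[Order.max/-oo%E]_(a < K) (phi a beta)%:E.

Definition beta_ij (i j : 'I_m) (b : R) : 'I_m -> R :=
  fun k => b * (k == i)%:R + (1 - b) * (k == j)%:R.

Definition supI (i j : 'I_m) : \bar R :=
  ereal_sup [set Ifun (beta_ij i j b) | b in `[0, 1]].

Definition Mset (r : R) : {set 'I_m * 'I_m} :=
  [set p : 'I_m * 'I_m | ((p.1 < p.2)%N && (supI p.1 p.2 < r%:E)%E)].

Definition minpair : \bar R :=
  \big[Order.min/+oo%E]_(i < m) \big[Order.min/+oo%E]_(j < m | (i < j)%N) supI i j.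

(* Delta_{M(R)}: lambda indexed by the pairs of M(R) (values outside M(R)
   are irrelevant) *)
Definition DeltaM (r : R) : set ('I_m -> 'I_m -> R) :=
  [set lam | (forall p, p \in Mset r -> 0 <= lam p.1 p.2) /\
             \sum_(p in Mset r) lam p.1 p.2 = 1].

(* choices of tilde beta_ij = beta_ij(bt i j), bt i j in [0,1] *)
Definition choices : set ('I_m -> 'I_m -> R) :=
  [set bt | forall i j, 0 <= bt i j <= 1].

Definition comb (r : R) (lam bt : 'I_m -> 'I_m -> R) : 'I_m -> R :=
  fun k => \sum_(p in Mset r) lam p.1 p.2 * beta_ij p.1 p.2 (bt p.1 p.2) k.

Definition Gfun (r : R) : \bar R :=
  if (r%:E < minpair)%E then +oo%E
  else ereal_sup [set ereal_inf [set Lfun (comb r lam bt) | lam in DeltaM r]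
                 | bt in choices].

Definition R_approach : \bar R :=
  ereal_sup [set r%:E | r in [set r : R | (r%:E <= Gfun r)%E]].

Definition R_static : \bar R :=
  ereal_sup [set \big[Order.min/+oo%E]_(i < m) \big[Order.min/+oo%E]_(j < m | j != i)
      ereal_sup [set (- \sum_(a < K) w a *
                  ln (\sum_(x : X) (nu i a x) `^ s * (nu j a x) `^ (1 - s)))%:E
                | s in `[0, 1]]
    | w in @simplex K].
End Defs.

(* Main.v *)
Require Import Defs.
From HB Require Import structures.
From mathcomp Require Import all_boot all_order all_algebra.
From mathcomp Require Import all_classical all_reals all_analysis.
From mathcomp Require Import ring lra.
Import Order.TTheory GRing.Theory Num.Theory.
Local Open Scope classical_set_scope.
Local Open Scope ring_scope.

Section Helpers.
Variable R : realType.

Lemma jensen_exp (I : finType) (S : pred I) (l t : I -> R) :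
  (forall p, S p -> 0 <= l p) -> \sum_(p | S p) l p = 1 ->
  expR (\sum_(p | S p) l p * t p) <= \sum_(p | S p) l p * expR (t p).
Proof.
move=> l0 l1.
set mu := \sum_(p | S p) l p * t p.
have step : forall p, expR mu * (1 + (t p - mu)) <= expR (t p).
  move=> p; have -> : expR (t p) = expR mu * expR (t p - mu).
    by rewrite -expRD addrC subrK.
  by rewrite ler_wpM2l ?expR_ge0 // expR_ge1Dx.
apply: (@le_trans _ _ (\sum_(p | S p) l p * (expR mu * (1 + (t p - mu))))).
  have -> : \sum_(p | S p) l p * (expR mu * (1 + (t p - mu))) =
     \sum_(p | S p) (expR mu * l p + (expR mu * (l p * t p) - expR mu * mu * l p)).
    by apply: eq_bigr => p _; ring.
  rewrite big_split /= sumrB -!mulr_sumr l1 -/mu.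
  by rewrite !mulr1 subrr addr0.
by apply: ler_sum => p Sp; rewrite ler_wpM2l ?l0 ?step.
Qed.

Lemma le_by_fin (x y : \bar R) :
  (forall r : R, (r%:E < x)%E -> (r%:E <= y)%E) -> (x <= y)%E.
Proof.
case: x => [x'| |] H; last exact: leNye.
- case: y H => [y'| |] H; last 2 first.
  + exact: leey.
  + by have := H (x' - 1); rewrite lte_fin; move/(_ ltac:(lra)).
  rewrite lee_fin leNgt; apply/negP => lt.
  have := H ((x' + y') / 2); rewrite !lte_fin lee_fin.
  by move/(_ ltac:(lra)); lra.
- case: y H => [y'| |] H; last 2 first.
  + exact: leey.
  + by have := H 0; move/(_ (ltry _)).
  have := H (y' + 1); move/(_ (ltry _)); rewrite lee_fin => ?; exfalso; lra.
Qed.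
End Helpers.

Section Phi.
Variables (R : realType) (X : finType) (K m : nat).
Variable nu : 'I_m -> 'I_K -> X -> R.
Hypothesis hpos : forall i a x, 0 < nu i a x.
Variable x0 : X.

Definition cf (a : 'I_K) (beta : 'I_m -> R) (x : X) : R :=
  \sum_(k < m) beta k * ln (nu k a x).

Lemma phiE a beta : phi nu a beta = - ln (\sum_(x : X) expR (cf a beta x)).
Proof.
rewrite /phi; congr (- ln _); apply: eq_bigr => x _.
rewrite /cf expR_sum; apply: eq_bigr => k _.
by rewrite /powR gt_eqF ?hpos.
Qed.

Lemma sumexp_gt0 (f : X -> R) : 0 < \sum_(x : X) expR (f x).
Proof.
rewrite (bigD1 x0) //= ltr_pwDl ?expR_gt0 //.
by apply: sumr_ge0 => x _; rewrite expR_ge0.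
Qed.

Lemma phi_concave (I : finType) (S : pred I) (l : I -> R) (B : I -> 'I_m -> R) a :
  (forall p, S p -> 0 <= l p) -> \sum_(p | S p) l p = 1 ->
  \sum_(p | S p) l p * phi nu a (B p) <=
  phi nu a (fun k => \sum_(p | S p) l p * B p k).
Proof.
move=> l0 l1; rewrite phiE.
under eq_bigr => p _ do rewrite phiE.
set G := fun p => \sum_(x : X) expR (cf a (B p) x).
have G0 : forall p, 0 < G p by move=> p; apply: sumexp_gt0.
have cfE : forall x, cf a (fun k => \sum_(p | S p) l p * B p k) x =
    \sum_(p | S p) l p * cf a (B p) x.
  move=> x; rewrite /cf.
  under eq_bigr => k _ do rewrite mulr_suml.
  rewrite exchange_big /=; apply: eq_bigr => p _.
  by rewrite mulr_sumr; apply: eq_bigr => k _; rewrite mulrA.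
have -> : \sum_(x : X) expR (cf a (fun k => \sum_(p | S p) l p * B p k) x) =
    \sum_(x : X) expR (\sum_(p | S p) l p * cf a (B p) x).
  by apply: eq_bigr => x _; rewrite cfE.
have -> : \sum_(p | S p) l p * - ln (G p) = - (\sum_(p | S p) l p * ln (G p)).
  by rewrite -sumrN; apply: eq_bigr => p _; rewrite mulrN.
rewrite lerN2 -[X in _ <= X]expRK ler_ln ?posrE ?expR_gt0 ?sumexp_gt0 //.
set E := expR (\sum_(p | S p) l p * ln (G p)).
have key : forall x, expR (\sum_(p | S p) l p * cf a (B p) x) <=
    (\sum_(p | S p) l p * expR (cf a (B p) x - ln (G p))) * E.
  move=> x.
  have -> : \sum_(p | S p) l p * cf a (B p) x =
     \sum_(p | S p) l p * (cf a (B p) x - ln (G p)) +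
     \sum_(p | S p) l p * ln (G p).
    by rewrite -big_split /=; apply: eq_bigr => p _; ring.
  by rewrite expRD ler_wpM2r ?expR_ge0 // jensen_exp.
apply: (le_trans (ler_sum _ (fun x _ => key x))).
rewrite -mulr_suml exchange_big /=.
have -> : \sum_(p | S p) \sum_(x : X) l p * expR (cf a (B p) x - ln (G p)) =
   \sum_(p | S p) l p.
  apply: eq_bigr => p _; rewrite -mulr_sumr.
  under eq_bigr => x _ do rewrite expRD expRN lnK ?posrE ?G0 //.
  by rewrite -mulr_suml divff ?mulr1 // gt_eqF ?G0.
by rewrite l1 mul1r.
Qed.

Lemma cf_beta i j s a x : i != j ->
  cf a (beta_ij i j s) x = s * ln (nu i a x) + (1 - s) * ln (nu j a x).
Proof.
move=> ij; rewrite /cf (bigD1 i) //= (bigD1 j) /=; last by rewrite eq_sym.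
rewrite big1 => [|k /andP[ki kj]]; last first.
  by rewrite /beta_ij (negPf ki) (negPf kj) !mulr0 addr0 mul0r.
have ji : (j == i) = false by rewrite eq_sym (negPf ij).
by rewrite /beta_ij !eqxx (negPf ij) ji !mulr0 !mulr1 !addr0 add0r.
Qed.

Lemma phi_beta i j s a : i != j ->
  phi nu a (beta_ij i j s) =
  - ln (\sum_(x : X) (nu i a x) `^ s * (nu j a x) `^ (1 - s)).
Proof.
move=> ij; rewrite phiE; congr (- ln _); apply: eq_bigr => x _.
by rewrite cf_beta // expRD /powR !gt_eqF ?hpos.
Qed.
End Phi.

Lemma wmax (R : realType) (K : nat) (hK : (0 < K)%N) (w : 'I_K -> R) (F : 'I_K -> R) :
  (forall a, 0 <= w a) -> \sum_(a < K) w a = 1 ->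
  ((\sum_(a < K) w a * F a)%:E <= \big[Order.max/-oo%E]_(a < K) (F a)%:E)%E.
Proof.
move=> w0 w1.
case: (arg_maxP F (i0 := Ordinal hK) (P := predT) isT) => a0 _ hmax.
apply: (le_trans _ (le_bigmax _ _ a0)); rewrite lee_fin.
rewrite -[leRHS]mul1r -w1 mulr_suml; apply: ler_sum => a _.
by rewrite ler_wpM2l ?w0 //; exact: hmax.
Qed.

Theorem mainTheorem17 (R : realType) (X : finType) (K m : nat)
    (nu : 'I_m -> 'I_K -> X -> R)
    (hm : (2 <= m)%N) (hK : (0 < K)%N)
    (hpos : forall i a x, 0 < nu i a x)
    (hsum : forall i a, \sum_(x : X) nu i a x = 1) :
  (R_static nu <= R_approach nu)%E.
Proof.
have x0 : X.
  case: (pickP (@predT X)) => [x _ //|h].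
  have m0 : (0 < m)%N by apply: leq_trans hm.
  have := hsum (Ordinal m0) (Ordinal hK).
  by rewrite big_pred0 // => /esym/eqP; rewrite oner_eq0.
rewrite /R_static; apply/ereal_supP => _ [w [w0 w1] <-].
apply: le_by_fin => r rV.
apply: ereal_sup_ubound; exists r => //=.
rewrite /Gfun; case: ifP => [_|_]; first exact: leey.
have hch : forall ij : 'I_m * 'I_m, exists s : R, (0 <= s <= 1) /\
   (ij.1 != ij.2 -> r < - \sum_(a < K) w a *
      ln (\sum_(x : X) (nu ij.1 a x) `^ s * (nu ij.2 a x) `^ (1 - s))).
  case=> i j /=; case: (eqVneq i j) => [_|ij]; first by exists 0; rewrite lexx ler01.
  have ji : j != i by rewrite eq_sym.
  have := lt_le_trans rV (le_trans (bigmin_le _ i _) (@bigmin_le_cond _ _ _ _ j (fun j0 => j0 != i) _ ji)).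
  move/ereal_sup_gt => [_ [s s01 <-]]; rewrite lte_fin => hr.
  by exists s; split => //; move: s01; rewrite /= in_itv.
have [f hf] := choice hch.
set bt := fun i j => f (i, j).
apply: le_ereal_sup_tmp.
exists (ereal_inf [set Defs.Lfun nu (comb nu r lam bt) | lam in DeltaM nu r]).
  by exists bt => // i j; have [] := hf (i, j).
apply: le_ereal_inf_tmp => _ [lam [lam0 lam1] <-].
apply: (@le_trans _ _ ((\sum_(a < K) w a * phi nu a (comb nu r lam bt))%:E)); last first.
  exact: (@wmax _ _ hK _ _ w0 w1).
rewrite lee_fin.
set B := fun p : 'I_m * 'I_m => beta_ij p.1 p.2 (bt p.1 p.2).
have h1 : forall p, p \in Mset nu r -> r <= \sum_(a < K) w a * phi nu a (B p).
  move=> p; rewrite inE => /andP[lt _].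
  have ne : p.1 != p.2 by apply/eqP => e; rewrite e ltnn in lt.
  have [_ /(_ ne) hr] := hf p.
  apply: ltW; move: hr; rewrite -sumrN; congr (_ < _); apply: eq_bigr => a _.
  by rewrite /B /bt phi_beta // mulrN -surjective_pairing.
apply: (@le_trans _ _ (\sum_(p in Mset nu r) lam p.1 p.2 * \sum_(a < K) w a * phi nu a (B p))).
  rewrite -[leLHS]mul1r -lam1 mulr_suml; apply: ler_sum => p hp.
  by rewrite ler_wpM2l ?lam0 ?h1.
have -> : \sum_(p in Mset nu r) lam p.1 p.2 * \sum_(a < K) w a * phi nu a (B p) =
    \sum_(a < K) w a * \sum_(p in Mset nu r) lam p.1 p.2 * phi nu a (B p).
  under eq_bigr => p _ do rewrite mulr_sumr.
  rewrite exchange_big /=; apply: eq_bigr => a _; rewrite mulr_sumr.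
  by apply: eq_bigr => p _; rewrite mulrCA.
apply: ler_sum => a _; rewrite ler_wpM2l ?w0 //.
exact: (@phi_concave _ _ _ _ nu hpos x0 _ (fun p => p \in Mset nu r) (fun p => lam p.1 p.2) B a lam0 lam1).
Qed.
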